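(* Let $n\ge 3$ and $\mathbf d\in\mathbb R_A^{\binom n2}$. Suppose $A_1$ is the unique Condorcet winner and $A_n$ the unique Condorcet loser of $\mathbf d$. Let $\mathbf d_{st}$ be the orthogonal projection of $\mathbf d$ onto $\mathbb{ST}_A^n$. Then $A_1$ is strictly ranked above $A_n$ in $\mathbf d_{st}$, i.e., the $(1,n)$ entry of $\mathbf d_{st}$ is strictly positive.
   Context: $\mathbb R_A^{\binom n2}$ denotes the space of vectors $\mathbf d=(d_{1,2},\dots,d_{1,n};d_{2,3},\dots;d_{n-1,n})$ indexed by pairs $i<j$ of $\{1,\dots,n\}$, with convention $d_{j,i}=-d_{i,j}$, carrying the standard Euclidean inner product. The entry $d_{i,j}$ compares alternatives $A_i,A_j$: $A_i$ is ranked above $A_j$ iff $d_{i,j}>0$. $A_j$ is a Condorcet winner of $\mathbf d$ if $d_{j,k}>0$ for all $k\ne j$, and a Condorcet loser if $d_{j,k}<0$ for all $k\neq j$. A vector is strongly transitive if $d_{i,j}+d_{j,k}=d_{i,k}$ for all triples $i,j,k$; $\mathbb{ST}_A^n$ is the linear subspace of strongly transitive vectors. *)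

(* Defs.v *)
From mathcomp Require Import all_boot all_order all_algebra.
Set Implicit Arguments. Unset Strict Implicit. Unset Printing Implicit Defensive.
Import Order.TTheory GRing.Theory Num.Theory.
Local Open Scope ring_scope.

(* A vector of R_A^{binom n 2}, represented as a function on ordered pairs
   of alternatives with the convention d j i = - d i j. *)
Definition pairvec (R : realFieldType) (n : nat) := 'I_n -> 'I_n -> R.

Definition antisym (R : realFieldType) (n : nat) (d : pairvec R n) : Prop :=
  forall i j : 'I_n, d j i = - d i j.

Definition pinner (R : realFieldType) (n : nat) (x y : pairvec R n) : R :=
  \sum_(i < n) \sum_(j < n | (i < j)%N) x i j * y i j.

Definition strongly_transitive (R : realFieldType) (n : nat) (d : pairvec R n) : Prop :=
  antisym d /\ forall i j k : 'I_n, d i j + d j k = d i k.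

Definition is_st_projection (R : realFieldType) (n : nat) (d p : pairvec R n) : Prop :=
  strongly_transitive p /\
  forall s : pairvec R n, strongly_transitive s ->
    pinner (fun i j => d i j - p i j) s = 0.

Definition condorcet_winner (R : realFieldType) (n : nat) (d : pairvec R n) (j : 'I_n) : Prop :=
  forall k : 'I_n, k != j -> 0 < d j k.

Definition condorcet_loser (R : realFieldType) (n : nat) (d : pairvec R n) (j : 'I_n) : Prop :=
  forall k : 'I_n, k != j -> d j k < 0.

(* Main.v *)
Require Import Defs.
From mathcomp Require Import all_boot all_order all_algebra.
From mathcomp Require Import ring lra.
Import Order.TTheory GRing.Theory Num.Theory.
Local Open Scope ring_scope.

Lemma pinner_full (R : realFieldType) (n : nat) (x y : pairvec R n) :
  antisym x -> antisym y ->
  \sum_(i < n) \sum_(j < n) x i j * y i j = 2%:R * pinner x y.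
Proof.
move=> hx hy.
pose f i j := x i j * y i j.
have fs : forall i j, f i j = f j i by move=> i j; rewrite /f hx hy; ring.
have f0 : forall i, f i i = 0.
  move=> i; rewrite /f; have h := hx i i.
  have -> : x i i = 0 by move: h; set a := x i i; move=> h; lra.
  by rewrite mul0r.
have E : forall i j, f i j = (if (i < j)%N then f i j else 0) + (if (j < i)%N then f j i else 0).
  move=> i j; case: (ltngtP i j) => h; rewrite ?addr0 ?add0r //.
  have e : i = j by apply/val_inj. by subst j; move: (f0 i).
rewrite /pinner.
transitivity (\sum_(i<n) \sum_(j<n) ((if (i<j)%N then f i j else 0) + (if (j<i)%N then f j i else 0))).
  by apply: eq_bigr => i _; apply: eq_bigr => j _; exact: E.
rewrite (eq_bigr (fun i : 'I_n => \sum_(j<n) (if (i<j)%N then f i j else 0) + \sum_(j<n) (if (j<i)%N then f j i else 0))); last first.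
  by move=> i _; rewrite big_split.
rewrite big_split /= [X in _ + X]exchange_big /=.
rewrite -!(eq_bigr _ (fun i _ => big_mkcond _ _)).
by rewrite mulr2n mulrDl mul1r.
Qed.

Lemma sum_pick (R : realFieldType) (n : nat) (F : 'I_n -> R) (a : 'I_n) :
  \sum_(i < n) (i == a)%:R * F i = F a.
Proof.
rewrite (bigD1 a) //= eqxx mul1r big1 ?addr0 // => i /negbTE ->.
by rewrite mul0r.
Qed.

Definition sv (R : realFieldType) (n : nat) (a : 'I_n) : pairvec R n :=
  fun i j => (i == a)%:R - (j == a)%:R.
Arguments sv R {n}.

Lemma sv_st (R : realFieldType) (n : nat) (a : 'I_n) : strongly_transitive (sv R a).
Proof. by split => [i j|i j k]; rewrite /sv; ring. Qed.

Lemma pinner_sv (R : realFieldType) (n : nat) (x : pairvec R n) (a : 'I_n) :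
  antisym x -> pinner x (sv R a) = \sum_(k < n) x a k.
Proof.
move=> hx.
have h := @pinner_full R n x (sv R a) hx (sv_st R n a).1.
have e : \sum_(i < n) \sum_(j < n) x i j * sv R a i j = 2%:R * \sum_(k < n) x a k.
  rewrite /sv.
  transitivity (\sum_(i < n) (i == a)%:R * \sum_(j < n) x i j
     - \sum_(j < n) (j == a)%:R * \sum_(i < n) x i j).
    rewrite (eq_bigr (fun i : 'I_n => \sum_(j < n) x i j * (i == a)%:R - \sum_(j < n) x i j * (j == a)%:R)); last first.
      by move=> i _; rewrite -sumrB; apply: eq_bigr => j _; rewrite mulrBr.
    rewrite sumrB; congr (_ - _).
      by apply: eq_bigr => i _; rewrite mulr_sumr; apply: eq_bigr => j _; rewrite mulrC.
    rewrite exchange_big /=; apply: eq_bigr => j _; rewrite mulr_sumr.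
    by apply: eq_bigr => i _; rewrite mulrC.
  rewrite !sum_pick.
  have -> : \sum_(i < n) x i a = - \sum_(i < n) x a i.
    by rewrite -sumrN; apply: eq_bigr => i _; rewrite hx.
  by rewrite opprK mulr2n mulrDl mul1r.
rewrite e in h.
have := h; set p := pinner _ _; set q := \sum_(k < n) _.
move=> hh; lra.
Qed.

Lemma d_diag (R : realFieldType) (n : nat) (d : pairvec R n) (i : 'I_n) :
  antisym d -> d i i = 0.
Proof. move=> hd; have h := hd i i; move: h; set a := d i i; move=> h; lra. Qed.

Theorem theorem3 (R : realFieldType) (n : nat) (hn : (3 <= n)%N)
  (d : pairvec R n) (hd : antisym d) (a1 an : 'I_n)
  (ha1 : nat_of_ord a1 = 0%N) (han : nat_of_ord an = n.-1)
  (hw : condorcet_winner d a1)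
  (hwu : forall j : 'I_n, condorcet_winner d j -> j = a1)
  (hl : condorcet_loser d an)
  (hlu : forall j : 'I_n, condorcet_loser d j -> j = an)
  (dst : pairvec R n) (hdst : is_st_projection d dst) :
  0 < dst a1 an.
Proof.
case: hdst => [[hpa hpt] hort].
have hB : forall a, \sum_(k < n) d a k = \sum_(k < n) dst a k.
  move=> a; have := hort _ (sv_st R n a).
  rewrite pinner_sv; last by move=> i j; rewrite hd hpa; ring.
  by rewrite sumrB => /eqP; rewrite subr_eq0 => /eqP.
have key : n%:R * dst a1 an = \sum_(k < n) d a1 k - \sum_(k < n) d an k.
  rewrite !hB -sumrB.
  transitivity (\sum_(k < n) dst a1 an).
    by rewrite sumr_const card_ord mulr_natl.
  apply: eq_bigr => k _; rewrite -(hpt a1 k an) (hpa k an); ring.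
have ne : an != a1.
  apply/negP => /eqP/(congr1 val); rewrite /= ha1 han; move: hn; case: n {d hd hw hwu hl hlu dst hpa hpt hort hB key a1 an ha1 han} => //= m; case: m => //.
have B1 : 0 < \sum_(k < n) d a1 k.
  rewrite (bigD1 an) //=.
  have h1 : 0 < d a1 an by apply: hw.
  have h2 : 0 <= \sum_(k < n | k != an) d a1 k.
    apply: sumr_ge0 => k _.
    case: (eqVneq k a1) => [->|hk]; first by rewrite d_diag.
    exact: ltW (hw k hk).
  move: h1 h2; set u := d a1 an; set v := \sum_(k < n | _) _; move=> h1 h2; lra.
have B2 : \sum_(k < n) d an k < 0.
  rewrite (bigD1 a1) //=.
  have h1 : d an a1 < 0 by apply: hl; rewrite eq_sym ne.
  have h2 : \sum_(k < n | k != a1) d an k <= 0.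
    apply: sumr_le0 => k _.
    case: (eqVneq k an) => [->|hk]; first by rewrite d_diag.
    exact: ltW (hl k hk).
  move: h1 h2; set u := d an a1; set v := \sum_(k < n | _) _; move=> h1 h2; lra.
have hn0 : (0 : R) < n%:R by rewrite ltr0n; case: n hn {d hd hw hwu hl hlu dst hpa hpt hort hB key a1 an ha1 han ne B1 B2}.
have : 0 < n%:R * dst a1 an.
  rewrite key; move: B1 B2; set u := \sum_(k < n) d a1 k; set v := \sum_(k < n) d an k; move=> h1 h2; lra.
by rewrite pmulr_rgt0.
Qed.
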